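(* (Completeness of the tableau calculus for simple type theory.) Every finite branch that is unsatisfiable is refutable in the tableau calculus $\mathcal{T}$ described in the context.
   Context: Types: there is a countable set of base types, among them a distinguished base type $o$ (truth values); the other base types are called sorts ($\alpha$ ranges over sorts). Every base type is a type, and if $\sigma,\tau$ are types then $\sigma\tau$ is a type (functions from $\sigma$ to $\tau$; we write $\sigma\tau\mu$ for $\sigma(\tau\mu)$). There is a countable set of names, each with a unique type, with infinitely many names of every type. Terms: every name is a term; if $s:\tau\mu$ and $t:\tau$ then $st:\mu$; if $x:\sigma$ is a name and $t:\tau$ then $\lambda x.t:\sigma\tau$. $\mathrm{Wff}_\sigma$ is the set of terms of type $\sigma$. The logical constants are the names $\neg:oo$ and, for each type $\sigma$, $=_\sigma:\sigma\sigma o$; all other names are variables. A formula is a term of type $o$; $s=_\sigma t$ stands for $(=_\sigma s)t$ and $s\neq_\sigma t$ for $\neg(s=_\sigma t)$. Semantics: a frame is a function $\mathcal{D}$ mapping each type to a nonempty set with $\mathcal{D}(\sigma\tau)\subseteq(\mathcal{D}\sigma\to\mathcal{D}\tau)$ (total functions). An assignment into $\mathcal{D}$ is a function $\mathcal{I}$ extending $\mathcal{D}$ that maps each name $x:\sigma$ to an element of $\mathcal{D}\sigma$; $\mathcal{I}^x_a$ agrees with $\mathcal{I}$ except that it maps $x$ to $a$. The (partial) evaluation $\hat{\mathcal{I}}$ is: $\hat{\mathcal{I}}x=\mathcal{I}x$; $\hat{\mathcal{I}}(st)=fa$ if $\hat{\mathcal{I}}s=f$ and $\hat{\mathcal{I}}t=a$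 are defined; $\hat{\mathcal{I}}(\lambda x.s)=f$ if $\lambda x.s:\sigma\tau$, $f\in\mathcal{D}(\sigma\tau)$ and $\widehat{\mathcal{I}^x_a}s=fa$ for all $a\in\mathcal{D}\sigma$ (undefined otherwise). An interpretation is an assignment whose evaluation is defined on all terms. An assignment is logical if $\mathcal{I}o=\{0,1\}$, $\mathcal{I}(\neg)$ is negation and $\mathcal{I}(=_\sigma)$ is the identity predicate on $\mathcal{I}\sigma$. A logical interpretation satisfies a formula $s$ if $\hat{\mathcal{I}}s=1$; a model of a set $A$ of formulas is a logical interpretation satisfying every member of $A$; $A$ is satisfiable if it has a model. Normalization: a fixed type-preserving total function $[\cdot]$ on terms; $s$ is normal if $[s]=s$. It satisfies (N1) $[[s]]=[s]$; (N2) $[[s]t]=[st]$; (N3) $[x s_1\dots s_n]=x[s_1]\dots[s_n]$ whenever $x$ is a name, $n\ge 0$ and $xs_1\dots s_n$ has a base type; (N4) $\hat{\mathcal{I}}[s]=\hat{\mathcal{I}}s$ for every interpretation $\mathcal{I}$. A substitution is a type-preserving partial function from names to terms; $\theta^x_s$ agrees with $\theta$ except it maps $x$ to $s$. Every substitution $\theta$ extends to a type-preserving total function $\hat\theta$ on terms with (S1) $\hat\theta x=\theta x$ if $x\in\mathrm{Dom}\,\theta$ and $\hat\theta x=x$ otherwise; (S2) $\hat\theta(st)=(\hat\theta s)(\hat\theta t)$; (S3) $[(\hat\theta(\lambda x.s))t]=[\widehat{\theta^x_t}s]$; (S4) $[\hat\emptyset s]=[s]$ where $\emptyset$ is the empty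 substitution. Tableau calculus $\mathcal{T}$: a branch is a set of normal formulas. A rule instance $A/A_1\dots A_n$ consists of a finite branch $A$ containing the premises (and meeting the side conditions) where $A_i$ is $A$ together with the formulas of the $i$-th alternative of the conclusion. Rules ($x$ always a variable): (DN) from $\neg\neg s$ infer $s$. (BQ) from $s=_o t$: $\{s,t\}\mid\{\neg s,\neg t\}$. (BE) from $s\neq_o t$: $\{s,\neg t\}\mid\{\neg s,t\}$. (FQ) from $s=_{\sigma\tau}t$ infer $[su]=[tu]$ for any normal $u:\sigma$. (FE) from $s\neq_{\sigma\tau}t$ infer $[sx]\neq[tx]$ for a variable $x:\sigma$ not occurring free in $A$. (Mat) from $xs_1\dots s_n$ and $\neg xt_1\dots t_n$ ($n\ge0$): $s_1\neq t_1\mid\dots\mid s_n\neq t_n$ (no alternatives if $n=0$). (Dec) from $xs_1\dots s_n\neq_\alpha xt_1\dots t_n$ ($n\ge 0$): $s_1\neq t_1\mid\dots\mid s_n\neq t_n$. (Con) from $s=_\alpha t$ and $u\neq_\alpha v$: $\{s\neq u,t\neq u\}\mid\{s\neq v,t\neq v\}$. A branch $A$ is closed if $x,\neg x\in A$ for some variable $x:o$ or $x\neq_\alpha x\in A$ for some variable $x:\alpha$. Restrictions: (1) an instance whose branch $A$ is closed is admitted only if it is an instance of Mat or Dec with $n=0$; (2) FE may be applied to $s\neq t\in A$ only if there is no variable $x$ with $[sx]\neq[tx]\in A$. The set of refutable branches is the least set such that whenever $A/A_1\dots A_n$ is an admitted rule instance and $A_1,\dots,A_n$ are refutable, $A$ is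 refutable. *)

(* Defs.v *)
From Stdlib Require Import List.
Import ListNotations.

(* Base types are indexed by nat; [Base 0] is the distinguished type o of truth
   values, every other base type [Base (S n)] is a sort. *)
Inductive ty : Type :=
| Base : nat -> ty
| Arr : ty -> ty -> ty.   (* Arr s t  =  "s t", functions from s to t *)

Definition o : ty := Base 0.
Definition is_sort (a : ty) : Prop := exists n, a = Base (S n).

Definition ty_eq_dec (a b : ty) : {a = b} + {a <> b}.
Proof. decide equality; decide equality. Defined.

Inductive name : Type :=
| Var : ty -> nat -> name
| NegC : name
| EqC : ty -> name.

Definition nty (x : name) : ty :=
  match x with
  | Var t _ => t
  | NegC => Arr o o
  | EqC t => Arr t (Arr t o)
  end.

Definition is_var (x : name) : Prop := exists t n, x = Var t n.

Definition name_eq_dec (x y : name) : {x = y} + {x <> y}.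
Proof. decide equality; try apply ty_eq_dec; decide equality. Defined.

(** * Terms (raw) and typing; the terms of the paper are the well-typed ones *)
Inductive tm : Type :=
| N : name -> tm
| App : tm -> tm -> tm
| Lam : name -> tm -> tm.

Fixpoint typeof (s : tm) : option ty :=
  match s with
  | N x => Some (nty x)
  | App s u =>
      match typeof s, typeof u with
      | Some (Arr a b), Some c => if ty_eq_dec a c then Some b else None
      | _, _ => None
      end
  | Lam x s =>
      match typeof s with
      | Some b => Some (Arr (nty x) b)
      | None => None
      end
  end.

Definition wt (s : tm) : Prop := exists t, typeof s = Some t.

Definition Neg (s : tm) : tm := App (N NegC) s.
Definition Eq (t : ty) (s u : tm) : tm := App (App (N (EqC t)) s) u.
Definition Neq (t : ty) (s u : tm) : tm := Neg (Eq t s u).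

Definition apps (h : tm) (ss : list tm) : tm := fold_left App ss h.

Fixpoint free (x : name) (s : tm) : Prop :=
  match s with
  | N y => x = y
  | App s u => free x s \/ free x u
  | Lam y s => x <> y /\ free x s
  end.

(* A frame: a nonempty carrier for each type; D(s t) is represented as a set
   of total functions D s -> D t via the extensional application map [app]. *)
Record frame : Type := Frame {
  D : ty -> Type;
  D_inh : forall t, D t;
  app : forall s t, D (Arr s t) -> D s -> D t;
  app_ext : forall s t (f g : D (Arr s t)), (forall a, app s t f a = app s t g a) -> f = g
}.
Arguments app {F s t} _ _ : rename.

Definition assignment (F : frame) : Type := forall x : name, D F (nty x).

Definition upd (F : frame) (I : assignment F) (x : name) (a : D F (nty x)) : assignment F :=
  fun y => match name_eq_dec x y with
           | left e => eq_rect x (fun z => D F (nty z)) a y e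
           | right _ => I y
           end.

(* Partial evaluation, as a (functional) relation: [ev F I t s v] means
   \hat I s is defined and equals v (of type t). *)
Inductive ev (F : frame) : assignment F -> forall t, tm -> D F t -> Prop :=
| ev_N : forall I x, ev F I (nty x) (N x) (I x)
| ev_App : forall I a b s u f v,
    ev F I (Arr a b) s f -> ev F I a u v -> ev F I b (App s u) (app f v)
| ev_Lam : forall I x b s (f : D F (Arr (nty x) b)),
    (forall v : D F (nty x), ev F (upd F I x v) b s (app f v)) ->
    ev F I (Arr (nty x) b) (Lam x s) f.

Definition interpretation (F : frame) (I : assignment F) : Prop :=
  forall s t, typeof s = Some t -> exists v, ev F I t s v.

(* logical assignment: D o is {0,1} (via the bijection [tv], 1 = true),
   negation and identity are interpreted standardly. *)
Record logical (F : frame) (I : assignment F) (tv : D F o -> bool) : Prop := {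
  tv_inj : forall a b, tv a = tv b -> a = b;
  tv_surj : forall b, exists a, tv a = b;
  log_neg : forall a, tv (app (I NegC) a) = negb (tv a);
  log_eq : forall t (a b : D F t), tv (app (app (I (EqC t)) a) b) = true <-> a = b
}.

Definition satisfies (F : frame) (I : assignment F) (tv : D F o -> bool) (s : tm) : Prop :=
  exists v, ev F I o s v /\ tv v = true.

Definition satisfiable (A : tm -> Prop) : Prop :=
  exists (F : frame) (I : assignment F) (tv : D F o -> bool),
    logical F I tv /\ interpretation F I /\ forall s, A s -> satisfies F I tv s.

Definition norm_axioms (norm : tm -> tm) : Prop :=
  (forall s t, typeof s = Some t -> typeof (norm s) = Some t) /\
  (forall s, wt s -> norm (norm s) = norm s) /\
  (forall s t, wt (App s t) -> norm (App (norm s) t) = norm (App s t)) /\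
  (forall x ss b, typeof (apps (N x) ss) = Some (Base b) ->
     norm (apps (N x) ss) = apps (N x) (map norm ss)) /\
  (forall (F : frame) (I : assignment F), interpretation F I ->
     forall s t v, typeof s = Some t -> (ev F I t (norm s) v <-> ev F I t s v)).

Definition subst : Type := name -> option tm.
Definition wt_subst (th : subst) : Prop :=
  forall x u, th x = Some u -> typeof u = Some (nty x).
Definition supd (th : subst) (x : name) (u : tm) : subst :=
  fun y => if name_eq_dec x y then Some u else th y.

Definition subst_axioms (norm : tm -> tm) (sapp : subst -> tm -> tm) : Prop :=
  forall th, wt_subst th ->
  (forall s t, typeof s = Some t -> typeof (sapp th s) = Some t) /\
  (forall x, sapp th (N x) = match th x with Some u => u | None => N x end) /\
  (forall s t, wt (App s t) -> sapp th (App s t) = App (sapp th s) (sapp th t)) /\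
  (forall x s t, wt (Lam x s) -> typeof t = Some (nty x) ->
     norm (App (sapp th (Lam x s)) t) = norm (sapp (supd th x t) s)) /\
  (forall s, wt s -> norm (sapp (fun _ => None) s) = norm s).

Section Tableau.
Variable norm : tm -> tm.

Definition normal (s : tm) : Prop := norm s = s.
Definition branch (A : tm -> Prop) : Prop :=
  forall s, A s -> typeof s = Some o /\ normal s.
Definition finite (A : tm -> Prop) : Prop :=
  exists l : list tm, forall s, A s <-> In s l.

Definition closed (A : tm -> Prop) : Prop :=
  (exists n, A (N (Var o n)) /\ A (Neg (N (Var o n)))) \/
  (exists a n, is_sort a /\ A (Neq a (N (Var a n)) (N (Var a n)))).

Definition dec_alts (ss ts : list tm) (alts : list (list tm)) : Prop :=
  length ss = length ts /\
  Forall2 (fun alt st => exists a, typeof (fst st) = Some a /\ alt = [Neq a (fst st) (snd st)])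
          alts (combine ss ts).

Inductive rule : Type := RDN | RBQ | RBE | RFQ | RFE | RMat | RDec | RCon.

(* [step r A alts]: A / A_1 ... A_n is an instance of rule r (with the FE
   restriction (2)), where A_i = A together with the formulas in the i-th
   element of [alts]. *)
Inductive step : rule -> (tm -> Prop) -> list (list tm) -> Prop :=
| st_DN : forall (A : tm -> Prop) s, A (Neg (Neg s)) -> step RDN A [[s]]
| st_BQ : forall (A : tm -> Prop) s t, A (Eq o s t) -> step RBQ A [[s; t]; [Neg s; Neg t]]
| st_BE : forall (A : tm -> Prop) s t, A (Neq o s t) -> step RBE A [[s; Neg t]; [Neg s; t]]
| st_FQ : forall (A : tm -> Prop) a b s t u,
    A (Eq (Arr a b) s t) -> normal u -> typeof u = Some a ->
    step RFQ A [[Eq b (norm (App s u)) (norm (App t u))]]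
| st_FE : forall (A : tm -> Prop) a b s t n,
    A (Neq (Arr a b) s t) ->
    (forall r, A r -> ~ free (Var a n) r) ->
    ~ (exists m, A (Neq b (norm (App s (N (Var a m)))) (norm (App t (N (Var a m)))))) ->
    step RFE A [[Neq b (norm (App s (N (Var a n)))) (norm (App t (N (Var a n))))]]
| st_Mat : forall (A : tm -> Prop) x ss ts alts,
    is_var x -> A (apps (N x) ss) -> A (Neg (apps (N x) ts)) -> dec_alts ss ts alts ->
    step RMat A alts
| st_Dec : forall (A : tm -> Prop) a x ss ts alts,
    is_sort a -> is_var x -> A (Neq a (apps (N x) ss) (apps (N x) ts)) ->
    dec_alts ss ts alts -> step RDec A alts
| st_Con : forall (A : tm -> Prop) a s t u v,
    is_sort a -> A (Eq a s t) -> A (Neq a u v) ->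
    step RCon A [[Neq a s u; Neq a t u]; [Neq a s v; Neq a t v]].

Definition admitted (A : tm -> Prop) (alts : list (list tm)) : Prop :=
  exists r, step r A alts /\
    (closed A -> (r = RMat \/ r = RDec) /\ alts = []).

Inductive refutable : (tm -> Prop) -> Prop :=
| refute : forall (A : tm -> Prop) alts,
    branch A -> finite A -> admitted A alts ->
    (forall alt, In alt alts -> refutable (fun s => A s \/ In s alt)) ->
    refutable A.

End Tableau.

(* Main.v *)
Require Import Defs.
From Stdlib Require Import List.
From Stdlib Require Import Lia Arith ClassicalEpsilon Classical FunctionalExtensionality PropExtensionality ProofIrrelevance Eqdep_dec.
From Stdlib Require Cantor.
Import ListNotations.
Arguments Cantor.to_nat : simpl never.


Lemma typeof_App s u b : typeof (App s u) = Some b <->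
  exists a, typeof s = Some (Arr a b) /\ typeof u = Some a.
Proof.
  simpl. split.
  - destruct (typeof s) as [[|a b']|]; try discriminate.
    destruct (typeof u) as [c|]; try discriminate.
    destruct (ty_eq_dec a c); try discriminate. intros H; inversion H; subst.
    eauto.
  - intros [a [H1 H2]]. rewrite H1, H2. destruct (ty_eq_dec a a); congruence.
Qed.

Lemma typeof_Neg s t : typeof (Neg s) = Some t <-> t = o /\ typeof s = Some o.
Proof.
  unfold Neg. rewrite typeof_App. simpl. split.
  - intros [a [H1 H2]]. inversion H1; subst. auto.
  - intros [-> H]. exists o. auto.
Qed.

Lemma typeof_Eq a s u t : typeof (Eq a s u) = Some t <->
  t = o /\ typeof s = Some a /\ typeof u = Some a.
Proof.
  unfold Eq. rewrite typeof_App. split.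
  - intros [c [H1 H2]]. rewrite typeof_App in H1. destruct H1 as [d [H3 H4]].
    simpl in H3. inversion H3; subst. auto.
  - intros [-> [H1 H2]]. exists a. split; auto. rewrite typeof_App. exists a. auto.
Qed.

Lemma typeof_Neq a s u t : typeof (Neq a s u) = Some t <->
  t = o /\ typeof s = Some a /\ typeof u = Some a.
Proof.
  unfold Neq. rewrite typeof_Neg, typeof_Eq. intuition.
Qed.

Lemma apps_snoc h ss s : apps h (ss ++ [s]) = App (apps h ss) s.
Proof. unfold apps. rewrite fold_left_app. reflexivity. Qed.

Lemma apps_cons h s ss : apps h (s :: ss) = apps (App h s) ss.
Proof. reflexivity. Qed.

Lemma apps_N_inj x y ss ts : apps (N x) ss = apps (N y) ts -> x = y /\ ss = ts.
Proof.
  revert ts. induction ss as [|s ss IH] using rev_ind; intros ts;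
  destruct ts as [|t ts _] using rev_ind; simpl; intros H.
  - inversion H; auto.
  - rewrite apps_snoc in H. discriminate.
  - rewrite apps_snoc in H. discriminate.
  - rewrite !apps_snoc in H. inversion H; subst.
    destruct (IH ts H1). subst. auto.
Qed.

Lemma apps_typed_head h ss T : typeof (apps h ss) = Some T -> exists H, typeof h = Some H.
Proof.
  revert h. induction ss as [|s ss IH]; simpl; intros h Hh; eauto.
  destruct (IH _ Hh) as [H' HH]. apply typeof_App in HH. destruct HH as [a [Ha _]]. eauto.
Qed.

Lemma apps_args_same h1 h2 ss ts T1 T2 :
  typeof h1 = typeof h2 -> typeof (apps h1 ss) = Some T1 -> typeof (apps h2 ts) = Some T2 ->
  length ss = length ts ->
  Forall2 (fun s t => exists a, typeof s = Some a /\ typeof t = Some a) ss ts.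
Proof.
  revert h1 h2 ts. induction ss as [|s ss IH]; intros h1 h2 ts E H1 H2 L;
  destruct ts as [|t ts]; simpl in L; try discriminate; constructor.
  - simpl in H1, H2. destruct (apps_typed_head _ _ _ H1) as [A1 HA1].
    destruct (apps_typed_head _ _ _ H2) as [A2 HA2].
    apply typeof_App in HA1. apply typeof_App in HA2.
    destruct HA1 as [a [Ha Hs]]. destruct HA2 as [a' [Ha' Ht]].
    rewrite E in Ha. rewrite Ha in Ha'. inversion Ha'; subst. eauto.
  - simpl in H1, H2. apply (IH (App h1 s) (App h2 t)); auto.
    destruct (apps_typed_head _ _ _ H1) as [A1 HA1].
    destruct (apps_typed_head _ _ _ H2) as [A2 HA2].
    pose proof HA1 as HB1. pose proof HA2 as HB2.
    apply typeof_App in HA1. apply typeof_App in HA2.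
    destruct HA1 as [a [Ha Hs]]. destruct HA2 as [a' [Ha' Ht]].
    rewrite E in Ha. rewrite Ha in Ha'. inversion Ha'; subst. rewrite HB1, HB2. reflexivity.
Qed.

Fixpoint tsize (t : ty) : nat :=
  match t with Base _ => 1 | Arr a b => S (tsize a + tsize b) end.

Lemma apps_args_small h ss T H : typeof (apps h ss) = Some T -> typeof h = Some H ->
  forall s, In s ss -> exists a, typeof s = Some a /\ tsize a < tsize H.
Proof.
  revert h H. induction ss as [|s ss IH]; simpl; intros h H HT Hh s' Hin; [tauto|].
  destruct (apps_typed_head _ _ _ HT) as [B HB].
  pose proof HB as HB'. apply typeof_App in HB. destruct HB as [a [Ha Hs]].
  rewrite Hh in Ha. inversion Ha; subst. destruct Hin as [<-|Hin].
  - exists a. simpl. split; auto. lia.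
  - destruct (IH _ _ HT HB' s' Hin) as [c [Hc Hlt]]. exists c. simpl. split; auto. lia.
Qed.

Section NormLemmas.
Variable norm : tm -> tm.
Hypothesis Hnorm : norm_axioms norm.

Lemma norm_type s t : typeof s = Some t -> typeof (norm s) = Some t.
Proof. apply Hnorm. Qed.

Lemma norm_idem s t : typeof s = Some t -> norm (norm s) = norm s.
Proof. intros H. apply Hnorm. eexists; eauto. Qed.

Lemma norm_Neg s : typeof s = Some o -> norm (Neg s) = Neg (norm s).
Proof.
  intros H. destruct Hnorm as (_&_&_&N3&_).
  apply (N3 NegC [s] 0). simpl. unfold Neg in *. rewrite H. reflexivity.
Qed.

Lemma norm_Eq a s t : typeof s = Some a -> typeof t = Some a -> norm (Eq a s t) = Eq a (norm s) (norm t).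
Proof.
  intros H1 H2. destruct Hnorm as (_&_&_&N3&_).
  apply (N3 (EqC a) [s; t] 0). change (apps (N (EqC a)) [s; t]) with (Eq a s t).
  apply typeof_Eq; auto.
Qed.

Lemma norm_Neq a s t : typeof s = Some a -> typeof t = Some a -> norm (Neq a s t) = Neq a (norm s) (norm t).
Proof.
  intros H1 H2. unfold Neq. rewrite norm_Neg, norm_Eq; auto. apply typeof_Eq; auto.
Qed.

Lemma normal_Neg s : typeof s = Some o -> norm (Neg s) = Neg s -> norm s = s.
Proof. intros H1 H2. rewrite (norm_Neg s H1) in H2. unfold Neg in H2. inversion H2. rewrite H0. exact H0. Qed.

Lemma normal_Eq a s t : typeof s = Some a -> typeof t = Some a ->
  norm (Eq a s t) = Eq a s t -> norm s = s /\ norm t = t.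
Proof. intros H1 H2 H3. rewrite (norm_Eq a s t H1 H2) in H3. unfold Eq in H3. injection H3; intros; split; assumption. Qed.

Lemma normal_Neq a s t : typeof s = Some a -> typeof t = Some a ->
  norm (Neq a s t) = Neq a s t -> norm s = s /\ norm t = t.
Proof. intros H1 H2 H3. rewrite (norm_Neq a s t H1 H2) in H3. unfold Neq, Neg, Eq in H3. injection H3; intros; split; assumption. Qed.

Lemma normal_apps x ss b : typeof (apps (N x) ss) = Some (Base b) ->
  norm (apps (N x) ss) = apps (N x) ss -> map norm ss = ss.
Proof.
  intros H1 H2. destruct Hnorm as (_&_&_&N3&_). rewrite (N3 x ss b H1) in H2.
  apply apps_N_inj in H2. tauto.
Qed.

Lemma norm_App_head s t : wt (App s t) -> norm (App (norm s) t) = norm (App s t).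
Proof. apply Hnorm. Qed.

End NormLemmas.


Lemma sig_eq {A : Type} {P : A -> Prop} (x y : sig P) : proj1_sig x = proj1_sig y -> x = y.
Proof. destruct x as [x px], y as [y py]; simpl; intros ->. f_equal. apply proof_irrelevance. Qed.

Section Model.
Variable norm : tm -> tm.
Variable sapp : subst -> tm -> tm.
Hypothesis Hnorm : norm_axioms norm.
Hypothesis Hsubst : subst_axioms norm sapp.
Variable en : nat -> tm.
Hypothesis Hen : forall t, exists n, en n = t.
Variable E : tm -> Prop.
Hypothesis HEbr : forall s, E s -> typeof s = Some o /\ norm s = s.
Hypothesis HE1 : forall s, E (Neg (Neg s)) -> E s.
Hypothesis HE2 : forall s t, E (Eq o s t) -> (E s /\ E t) \/ (E (Neg s) /\ E (Neg t)).
Hypothesis HE3 : forall s t, E (Neq o s t) -> (E s /\ E (Neg t)) \/ (E (Neg s) /\ E t).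
Hypothesis HE4 : forall a b s t u, E (Eq (Arr a b) s t) -> norm u = u -> typeof u = Some a ->
  E (Eq b (norm (App s u)) (norm (App t u))).
Hypothesis HE5 : forall a b s t, E (Neq (Arr a b) s t) ->
  exists n, E (Neq b (norm (App s (N (Var a n)))) (norm (App t (N (Var a n))))).
Hypothesis HE6 : forall x ss ts, is_var x -> E (apps (N x) ss) -> E (Neg (apps (N x) ts)) ->
  length ss = length ts -> exists s t a, In (s,t) (combine ss ts) /\ typeof s = Some a /\ E (Neq a s t).
Hypothesis HE7 : forall a x ss ts, is_sort a -> is_var x -> E (Neq a (apps (N x) ss) (apps (N x) ts)) ->
  length ss = length ts -> exists s t b, In (s,t) (combine ss ts) /\ typeof s = Some b /\ E (Neq b s t).
Hypothesis HE8 : forall a s t u v, is_sort a -> E (Eq a s t) -> E (Neq a u v) ->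
  (E (Neq a s u) /\ E (Neq a t u)) \/ (E (Neq a s v) /\ E (Neq a t v)).

Definition pvo (b : bool) (t : tm) : Prop :=
  if b then ~ E (Neg (norm t)) else ~ E (norm t).

Definition inc (a : ty) (s t : tm) : Prop := E (Neq a s t) \/ E (Neq a t s).

Definition disc (a : ty) (P : tm -> Prop) : Prop :=
  (forall s, P s -> typeof s = Some a /\ norm s = s) /\
  (forall s t, P s -> P t -> ~ inc a s t) /\
  (forall s, typeof s = Some a -> norm s = s -> ~ inc a s s -> (forall t, P t -> ~ inc a s t) -> P s).

Fixpoint Dpv (T : ty) : {X : Type & X -> tm -> Prop} :=
  match T with
  | Base 0 => existT (fun X => X -> tm -> Prop)
       {b : bool | exists t, typeof t = Some o /\ pvo b t} (fun b t => pvo (proj1_sig b) t)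
  | Base (S n) => existT (fun X => X -> tm -> Prop)
       {P : tm -> Prop | disc (Base (S n)) P /\ exists t, P t} (fun P t => proj1_sig P (norm t))
  | Arr A B => existT (fun X => X -> tm -> Prop)
      {f : projT1 (Dpv A) -> projT1 (Dpv B) | exists u, typeof u = Some (Arr A B) /\
          forall c w, projT2 (Dpv A) c w -> typeof w = Some A -> projT2 (Dpv B) (f c) (App u w)}
      (fun f u => forall c w, projT2 (Dpv A) c w -> typeof w = Some A ->
          projT2 (Dpv B) (proj1_sig f c) (App u w))
  end.

Definition Dty (T : ty) : Type := projT1 (Dpv T).
Definition pv (T : ty) : Dty T -> tm -> Prop := projT2 (Dpv T).

Lemma Dwit T (c : Dty T) : exists t, typeof t = Some T /\ pv T c t.
Proof.
  destruct T as [[|n]|A B]; simpl in *.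
  - destruct (proj2_sig c) as [t [H1 H2]]. exists t. auto.
  - destruct (proj2_sig c) as [[H1 _] [t Ht]]. exists t. destruct (H1 t Ht) as [H3 H4].
    split; auto. unfold pv; simpl. rewrite H4. auto.
  - destruct (proj2_sig c) as [u [H1 H2]]. exists u. split; auto.
Qed.

Lemma pv_norm T : forall c s s', typeof s = Some T -> typeof s' = Some T -> norm s = norm s' ->
  pv T c s -> pv T c s'.
Proof.
  induction T as [[|n]|A IHA B IHB]; intros c s s' Hs Hs' Hn; unfold pv; simpl.
  - unfold pvo. rewrite Hn. auto.
  - rewrite Hn. auto.
  - intros H c' w Hw Htw. apply (IHB _ (App s w)).
    + apply typeof_App. eauto.
    + apply typeof_App. eauto.
    + rewrite <- (norm_App_head norm Hnorm s w), <- (norm_App_head norm Hnorm s' w), Hn; auto.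
      * exists B. apply typeof_App. eauto.
      * exists B. apply typeof_App. eauto.
    + apply H; auto.
Qed.

Lemma pv_norm_iff T c s : typeof s = Some T -> (pv T c s <-> pv T c (norm s)).
Proof.
  intros H. split; apply pv_norm; auto using norm_type.
  - rewrite (norm_idem norm Hnorm s T H). auto.
  - rewrite (norm_idem norm Hnorm s T H). auto.
Qed.

Lemma pv_to_norm T c s : typeof s = Some T -> pv T c s -> pv T c (norm s).
Proof. intros H. apply (pv_norm_iff T c s H). Qed.

Definition Pprop (T : ty) : Prop :=
  forall s t c d, E (Eq T s t) -> pv T c s -> pv T d t -> c = d.

Lemma E_Eq_typed T s t : E (Eq T s t) -> typeof s = Some T /\ typeof t = Some T /\ norm s = s /\ norm t = t.
Proof.
  intros H. destruct (HEbr _ H) as [H1 H2]. apply typeof_Eq in H1. destruct H1 as [_ [H3 H4]].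
  destruct (normal_Eq norm Hnorm T s t H3 H4 H2). auto.
Qed.

Lemma E_Neq_typed T s t : E (Neq T s t) -> typeof s = Some T /\ typeof t = Some T /\ norm s = s /\ norm t = t.
Proof.
  intros H. destruct (HEbr _ H) as [H1 H2]. apply typeof_Neq in H1. destruct H1 as [_ [H3 H4]].
  destruct (normal_Neq norm Hnorm T s t H3 H4 H2). auto.
Qed.

Lemma inc_sym a s t : inc a s t -> inc a t s.
Proof. unfold inc; tauto. Qed.

Lemma Pprop_all T : Pprop T.
Proof.
  induction T as [[|n]|A IHA B IHB]; intros s t c d HE Hc Hd;
  destruct (E_Eq_typed _ _ _ HE) as (Ts & Tt & Ns & Nt).
  - apply sig_eq.
    assert (K : forall b1 b2 : bool, pvo b1 s -> pvo b2 t -> b1 = b2).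
    { unfold pvo. rewrite ?Ns, ?Nt. intros b1 b2 K1 K2.
      destruct (HE2 _ _ HE) as [[H1 H2]|[H1 H2]];
      destruct b1, b2; simpl in *; first [reflexivity | tauto]. }
    apply K; assumption.
  - destruct (proj2_sig c) as [[D1a [D1b D1c]] _].
    destruct (proj2_sig d) as [[D2a [D2b D2c]] _].
    assert (Hc' : proj1_sig c s) by (rewrite <- Ns; exact Hc).
    assert (Hd' : proj1_sig d t) by (rewrite <- Nt; exact Hd). clear Hc Hd.
    apply sig_eq.
    assert (Hs : is_sort (Base (S n))) by (exists n; auto).
    apply functional_extensionality. intros w. apply propositional_extensionality.
    split; intros Hw.
    + destruct (D1a w Hw) as [Tw Nw]. apply D2c; [exact Tw|exact Nw|exact (D1b w w Hw Hw)|].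
      intros w' Hw' Hinc. destruct Hinc as [Hi|Hi].
        -- destruct (HE8 _ _ _ _ _ Hs HE Hi) as [[Ha Hb]|[Ha Hb]].
           ++ apply (D1b s w); auto. left; auto.
           ++ apply (D2b t w'); auto. left; auto.
        -- destruct (HE8 _ _ _ _ _ Hs HE Hi) as [[Ha Hb]|[Ha Hb]].
           ++ apply (D2b t w'); auto. left; auto.
           ++ apply (D1b s w); auto. left; auto.
    + destruct (D2a w Hw) as [Tw Nw]. apply D1c; [exact Tw|exact Nw|exact (D2b w w Hw Hw)|].
      intros w' Hw' Hinc. destruct Hinc as [Hi|Hi].
        -- destruct (HE8 _ _ _ _ _ Hs HE Hi) as [[Ha Hb]|[Ha Hb]].
           ++ apply (D2b t w); auto. left; auto.
           ++ apply (D1b s w'); auto. left; auto.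
        -- destruct (HE8 _ _ _ _ _ Hs HE Hi) as [[Ha Hb]|[Ha Hb]].
           ++ apply (D1b s w'); auto. left; auto.
           ++ apply (D2b t w); auto. left; auto.
  - apply sig_eq. apply functional_extensionality. intros a.
    destruct (Dwit A a) as [w [Tw Hw]].
    assert (Tnw : typeof (norm w) = Some A) by (apply norm_type; auto).
    assert (Nnw : norm (norm w) = norm w) by (apply (norm_idem norm Hnorm w A Tw)).
    apply (pv_norm_iff A a w Tw) in Hw.
    pose proof (HE4 _ _ _ _ _ HE Nnw Tnw) as HE'.
    apply (IHB _ _ _ _ HE').
    + apply pv_to_norm. apply typeof_App; eauto. apply Hc; auto.
    + apply pv_to_norm. apply typeof_App; eauto. apply Hd; auto.
Qed.

Definition Qprop (T : ty) : Prop :=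
  forall s t c, E (Neq T s t) -> pv T c s -> pv T c t -> False.

Definition Vprop (T : ty) : Prop := forall m, exists c : Dty T, pv T c (N (Var T m)).

Lemma norm_var x : is_var x -> (exists b, nty x = Base b) -> norm (N x) = N x.
Proof.
  intros _ [b Hb]. destruct Hnorm as (_&_&_&N3&_). apply (N3 x [] b). simpl. congruence.
Qed.

Lemma E_no_var_o m : E (N (Var o m)) -> E (Neg (N (Var o m))) -> False.
Proof.
  intros H1 H2. destruct (HE6 (Var o m) [] [] ltac:(do 2 eexists; eauto) H1 H2 eq_refl)
    as (s & t & a & Hin & _). simpl in Hin. auto.
Qed.

Lemma Qprop_base0 : Qprop o.
Proof.
  intros s t c HE Hs Ht. destruct (E_Neq_typed _ _ _ HE) as (Ts & Tt & Ns & Nt).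
  assert (K : forall b, pvo b s -> pvo b t -> False).
  { unfold pvo. rewrite Ns, Nt. intros b K1 K2.
    destruct (HE3 _ _ HE) as [[H1 H2]|[H1 H2]]; destruct b; simpl in *; tauto. }
  exact (K _ Hs Ht).
Qed.

Lemma Qprop_sort n : Qprop (Base (S n)).
Proof.
  intros s t c HE Hs Ht. destruct (E_Neq_typed _ _ _ HE) as (Ts & Tt & Ns & Nt).
  destruct (proj2_sig c) as [[D1 [D2 D3]] _].
  apply (D2 s t); [rewrite <- Ns; exact Hs | rewrite <- Nt; exact Ht | left; auto].
Qed.

Lemma Qprop_arr A B : Vprop A -> Qprop B -> Qprop (Arr A B).
Proof.
  intros VA QB s t c HE Hs Ht. destruct (E_Neq_typed _ _ _ HE) as (Ts & Tt & Ns & Nt).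
  destruct (HE5 _ _ _ _ HE) as [m Hm]. destruct (VA m) as [a Ha].
  apply (QB _ _ (proj1_sig c a) Hm).
  - apply pv_to_norm. apply typeof_App; eauto. apply Hs; auto.
  - apply pv_to_norm. apply typeof_App; eauto. apply Ht; auto.
Qed.

Definition inco (s t : tm) : Prop :=
  (E (norm s) /\ E (Neg (norm t))) \/ (E (Neg (norm s)) /\ E (norm t)).

Fixpoint HC (T : ty) (P : tm -> Prop) : Prop :=
  match T with
  | Base 0 => forall s t, P s -> P t -> ~ inco s t
  | Base (S n) => forall s t, P s -> P t -> ~ inc (Base (S n)) (norm s) (norm t)
  | Arr A B => forall c : Dty A, HC B (fun u => exists s w, P s /\ pv A c w /\ typeof w = Some A /\ u = App s w)
  end.

Lemma HC_anti T : forall (P P' : tm -> Prop), (forall u, P' u -> P u) -> HC T P -> HC T P'.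
Proof.
  induction T as [[|n]|A IHA B IHB]; simpl; intros P P' Hsub H.
  - intros s t H1 H2. apply H; auto.
  - intros s t H1 H2. apply H; auto.
  - intros c. apply (IHB _ _ ) with (2 := H c). intros u (s & w & H1 & H2 & H3 & H4).
    exists s, w. auto.
Qed.

Lemma ext_disc a (Q0 : tm -> Prop) :
  (forall s, Q0 s -> typeof s = Some a /\ norm s = s) ->
  (forall s t, Q0 s -> Q0 t -> ~ inc a s t) ->
  exists P, disc a P /\ forall s, Q0 s -> P s.
Proof.
  intros H1 H2.
  set (ch := fix ch (k : nat) : tm -> Prop :=
    match k with 0 => Q0
    | S k => fun u => ch k u \/ (u = en k /\ typeof u = Some a /\ norm u = u /\ ~ inc a u u /\
               forall t, ch k t -> ~ inc a u t) end).
  assert (Hty : forall k s, ch k s -> typeof s = Some a /\ norm s = s).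
  { induction k; simpl; intros s Hs; [auto|]. destruct Hs as [Hs|(_&?&?&_)]; auto. }
  assert (Hmono : forall k j s, ch k s -> ch (j + k) s).
  { intros k j; induction j; simpl; auto. }
  assert (Hcomp : forall k s t, ch k s -> ch k t -> ~ inc a s t).
  { induction k; simpl; intros s t Hs Ht; [auto|].
    destruct Hs as [Hs|(Es&_&_&Hss&Hs)], Ht as [Ht|(Et&_&_&Htt&Ht)].
    - auto.
    - intros Hi. apply (Ht s Hs). apply inc_sym. auto.
    - auto.
    - rewrite Et, <- Es. auto. }
  exists (fun u => exists k, ch k u). split; [split; [|split]|].
  - intros s [k Hs]. eauto.
  - intros s t [k1 Hs] [k2 Ht]. apply (Hcomp (k1 + k2)).
    + replace (k1 + k2) with (k2 + k1) by lia. auto.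
    + auto.
  - intros s Ts Ns Hss Hall. destruct (Hen s) as [k Hk]. exists (S k). simpl. right.
    repeat split; auto. intros t Ht. apply Hall. eauto.
  - intros s Hs. exists 0. auto.
Qed.

Lemma Hlem T : forall P, (forall s, P s -> typeof s = Some T) -> (exists s, P s) -> HC T P ->
  exists c : Dty T, forall s, P s -> pv T c s.
Proof.
  induction T as [[|n]|A IHA B IHB]; intros P HT [s0 Hs0] HP.
  - set (b := if excluded_middle_informative (exists s, P s /\ E (norm s)) then true else false).
    assert (Hb : forall s, P s -> pvo b s).
    { intros s Hs. unfold b, pvo. destruct excluded_middle_informative as [[s1 [H1 H2]]|Hn].
      - intros H3. apply (HP s1 s H1 Hs). left. auto.
      - intros H3. apply Hn. eauto. }
    exists (exist _ b (ex_intro _ s0 (conj (HT s0 Hs0) (Hb s0 Hs0)))). exact Hb.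
  - destruct (ext_disc (Base (S n)) (fun u => exists s, P s /\ u = norm s)) as [D [HD HD2]].
    + intros u [s [Hs ->]]. split. apply norm_type; auto. apply (norm_idem norm Hnorm s _ (HT s Hs)).
    + intros u v [s [Hs ->]] [t [Ht ->]]. apply HP; auto.
    + exists (exist _ D (conj HD (ex_intro _ (norm s0) (HD2 _ (ex_intro _ s0 (conj Hs0 eq_refl)))))).
      intros s Hs. unfold pv; simpl. apply HD2. eauto.
  - assert (Hc : forall c : Dty A, exists d : Dty B, forall u,
       (exists s w, P s /\ pv A c w /\ typeof w = Some A /\ u = App s w) -> pv B d u).
    { intros c. apply IHB.
      - intros u (s & w & H1 & H2 & H3 & ->). apply typeof_App. exists A. split; auto.
      - destruct (Dwit A c) as [w [Tw Hw]]. exists (App s0 w). exists s0, w. auto.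
      - apply HP. }
    set (f := fun c => proj1_sig (constructive_indefinite_description _ (Hc c))).
    assert (Hf : forall c u, (exists s w, P s /\ pv A c w /\ typeof w = Some A /\ u = App s w) -> pv B (f c) u).
    { intros c. unfold f. destruct constructive_indefinite_description as [d Hd]. simpl. auto. }
    assert (Hw : exists u, typeof u = Some (Arr A B) /\
          forall c w, pv A c w -> typeof w = Some A -> pv B (f c) (App u w)).
    { exists s0. split; auto. intros c w H1 H2. apply Hf. exists s0, w. auto. }
    exists (exist _ f Hw). intros s Hs c w H1 H2. apply Hf. exists s, w. auto.
Qed.

Definition InvP (x : name) (cs : list {A : ty & Dty A}) (u : tm) : Prop :=
  exists ts, u = apps (N x) ts /\
    Forall2 (fun c t => typeof t = Some (projT1 c) /\ pv (projT1 c) (projT2 c) t) cs ts.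

Lemma combine_pick {X : Type} (R : X -> tm -> Prop) (cs : list X) ts ts' s t :
  Forall2 R cs ts -> Forall2 R cs ts' -> In (s, t) (combine (map norm ts) (map norm ts')) ->
  exists c u u', s = norm u /\ t = norm u' /\ R c u /\ R c u' /\ In u ts.
Proof.
  intros H1. revert ts'. induction H1 as [|c u cs ts Hcu Hr IH]; intros ts' H2 Hin.
  - simpl in Hin. tauto.
  - inversion H2 as [|c' u' cs' ts'' Hcu' Hr']; subst. simpl in Hin. destruct Hin as [Heq|Hin].
    + inversion Heq; subst. exists c, u, u'. simpl. intuition.
    + destruct (IH _ Hr' Hin) as (c0 & v & v' & ? & ? & ? & ? & ?). exists c0, v, v'. simpl. intuition.
Qed.

Lemma Forall2_length' {X Y : Type} (R : X -> Y -> Prop) l1 l2 : Forall2 R l1 l2 -> length l1 = length l2.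
Proof. induction 1; simpl; auto. Qed.

Lemma HC_inv x (Hx : is_var x) (HQ : forall A, tsize A < tsize (nty x) -> Qprop A) T :
  forall cs, (forall u, InvP x cs u -> typeof u = Some T) -> HC T (InvP x cs).
Proof.
  induction T as [[|n]|A IHA B IHB]; intros cs HT; simpl.
  - intros s t (ts & -> & Hts) (ts' & -> & Hts') Hinc.
    assert (Ts := HT _ (ex_intro _ ts (conj eq_refl Hts))).
    assert (Tt := HT _ (ex_intro _ ts' (conj eq_refl Hts'))).
    destruct Hnorm as (_&_&_&N3&_).
    unfold inco in Hinc. rewrite (N3 _ _ _ Ts), (N3 _ _ _ Tt) in Hinc.
    assert (L : length (map norm ts) = length (map norm ts')).
    { rewrite !length_map. apply Forall2_length' in Hts. apply Forall2_length' in Hts'. congruence. }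
    destruct Hinc as [[H1 H2]|[H1 H2]].
    + destruct (HE6 _ _ _ Hx H1 H2 L) as (s & t & a & Hin & Ta & HEn).
      destruct (combine_pick _ _ _ _ _ _ Hts Hts' Hin) as (c & u & u' & -> & -> & [Tu Pu] & [Tu' Pu'] & Inu).
      destruct (apps_args_small _ _ _ _ Ts eq_refl u Inu) as (a' & Ta' & Hlt).
      rewrite Tu in Ta'. inversion Ta'; subst a'.
      rewrite (norm_type _ Hnorm _ _ Tu) in Ta. inversion Ta; subst a.
      apply (HQ _ Hlt _ _ (projT2 c) HEn); apply pv_to_norm; auto.
    + assert (L' : length (map norm ts') = length (map norm ts)) by auto.
      destruct (HE6 _ _ _ Hx H2 H1 L') as (s & t & a & Hin & Ta & HEn).
      destruct (combine_pick _ _ _ _ _ _ Hts' Hts Hin) as (c & u & u' & -> & -> & [Tu Pu] & [Tu' Pu'] & Inu).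
      destruct (apps_args_small _ _ _ _ Tt eq_refl u Inu) as (a' & Ta' & Hlt).
      rewrite Tu in Ta'. inversion Ta'; subst a'.
      rewrite (norm_type _ Hnorm _ _ Tu) in Ta. inversion Ta; subst a.
      apply (HQ _ Hlt _ _ (projT2 c) HEn); apply pv_to_norm; auto.
  - intros s t (ts & -> & Hts) (ts' & -> & Hts') Hinc.
    assert (Ts := HT _ (ex_intro _ ts (conj eq_refl Hts))).
    assert (Tt := HT _ (ex_intro _ ts' (conj eq_refl Hts'))).
    destruct Hnorm as (_&_&_&N3&_).
    rewrite (N3 _ _ _ Ts), (N3 _ _ _ Tt) in Hinc.
    assert (L : length (map norm ts) = length (map norm ts')).
    { rewrite !length_map. apply Forall2_length' in Hts. apply Forall2_length' in Hts'. congruence. }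
    assert (Hs : is_sort (Base (S n))) by (exists n; auto).
    destruct Hinc as [H1|H1].
    + destruct (HE7 _ _ _ _ Hs Hx H1 L) as (s & t & a & Hin & Ta & HEn).
      destruct (combine_pick _ _ _ _ _ _ Hts Hts' Hin) as (c & u & u' & -> & -> & [Tu Pu] & [Tu' Pu'] & Inu).
      destruct (apps_args_small _ _ _ _ Ts eq_refl u Inu) as (a' & Ta' & Hlt).
      rewrite Tu in Ta'. inversion Ta'; subst a'.
      rewrite (norm_type _ Hnorm _ _ Tu) in Ta. inversion Ta; subst a.
      apply (HQ _ Hlt _ _ (projT2 c) HEn); apply pv_to_norm; auto.
    + assert (L' : length (map norm ts') = length (map norm ts)) by auto.
      destruct (HE7 _ _ _ _ Hs Hx H1 L') as (s & t & a & Hin & Ta & HEn).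
      destruct (combine_pick _ _ _ _ _ _ Hts' Hts Hin) as (c & u & u' & -> & -> & [Tu Pu] & [Tu' Pu'] & Inu).
      destruct (apps_args_small _ _ _ _ Tt eq_refl u Inu) as (a' & Ta' & Hlt).
      rewrite Tu in Ta'. inversion Ta'; subst a'.
      rewrite (norm_type _ Hnorm _ _ Tu) in Ta. inversion Ta; subst a.
      apply (HQ _ Hlt _ _ (projT2 c) HEn); apply pv_to_norm; auto.
  - intros c. apply HC_anti with (P := InvP x (cs ++ [existT _ A c])).
    + intros u (s & w & (ts & -> & Hts) & Hw & Tw & ->). exists (ts ++ [w]).
      rewrite apps_snoc. split; auto. apply Forall2_app; auto.
    + apply IHB. intros u (ts & -> & Hts).
      apply Forall2_app_inv_l in Hts. destruct Hts as (l1 & l2 & H1 & H2 & ->).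
      inversion H2 as [|c' w cs' l2' [Tw Pw] Hnil]; subst. inversion Hnil; subst.
      rewrite apps_snoc. apply typeof_App. exists A. split; auto.
      apply (HT _ (ex_intro _ l1 (conj eq_refl H1))).
Qed.

Lemma Vprop_of T : (forall A, tsize A < tsize T -> Qprop A) -> Vprop T.
Proof.
  intros HQ m. set (x := Var T m).
  destruct (Hlem T (InvP x [])) as [c Hc].
  - intros u (ts & -> & Hts). inversion Hts; subst. reflexivity.
  - exists (N x). exists []. split; auto.
  - apply HC_inv; auto.
    + exists T, m. reflexivity.
    + intros u (ts & -> & Hts). inversion Hts; subst. reflexivity.
  - exists c. apply Hc. exists []. split; auto.
Qed.

Lemma QV_all : forall n T, tsize T < n -> Qprop T /\ Vprop T.
Proof.
  induction n as [|n IH]; intros T HT; [lia|].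
  assert (HQ : Qprop T).
  { destruct T as [[|k]|A B].
    - apply Qprop_base0.
    - apply Qprop_sort.
    - simpl in HT. apply Qprop_arr; apply IH; lia. }
  split; auto. apply Vprop_of. intros A HA. apply IH. lia.
Qed.

Lemma Qall T : Qprop T. Proof. apply (QV_all (S (tsize T))). lia. Qed.
Lemma Vall T : Vprop T. Proof. apply (QV_all (S (tsize T))). lia. Qed.


Lemma pv_neg b t : typeof t = Some o -> pvo b t -> pvo (negb b) (Neg t).
Proof.
  intros Ht. unfold pvo. rewrite (norm_Neg norm Hnorm t Ht).
  destruct b; simpl; auto.
Qed.

Lemma negf_ok (c : Dty o) : exists t, typeof t = Some o /\ pvo (negb (proj1_sig c)) t.
Proof.
  destruct (Dwit o c) as [t [Ht Hp]]. exists (Neg t). split.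
  - apply typeof_Neg. auto.
  - apply pv_neg; auto.
Qed.

Definition negf (c : Dty o) : Dty o := exist _ (negb (proj1_sig c)) (negf_ok c).

Lemma negel_ok : exists u, typeof u = Some (Arr o o) /\
  forall c w, pv o c w -> typeof w = Some o -> pv o (negf c) (App u w).
Proof.
  exists (N NegC). split; auto. intros c w H1 H2. apply pv_neg; auto.
Qed.

Definition negel : Dty (Arr o o) := exist _ negf negel_ok.

Definition eqb (T : ty) (c d : Dty T) : bool :=
  if excluded_middle_informative (c = d) then true else false.

Lemma pv_eqb T c d s t : typeof s = Some T -> typeof t = Some T -> pv T c s -> pv T d t ->
  pvo (eqb T c d) (Eq T s t).
Proof.
  intros Ts Tt Hs Ht. unfold pvo, eqb. rewrite (norm_Eq norm Hnorm T s t Ts Tt).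
  destruct excluded_middle_informative as [<-|Hne].
  - intros H. apply (Qall T (norm s) (norm t) c H); apply pv_to_norm; auto.
  - intros H. apply Hne. apply (Pprop_all T _ _ c d H); apply pv_to_norm; auto.
Qed.

Lemma eqf_ok1 T (c d : Dty T) : exists t, typeof t = Some o /\ pvo (eqb T c d) t.
Proof.
  destruct (Dwit T c) as [s [Ts Hs]]. destruct (Dwit T d) as [t [Tt Ht]].
  exists (Eq T s t). split.
  - apply typeof_Eq. auto.
  - apply pv_eqb; auto.
Qed.

Definition eqf_fun T (c : Dty T) : Dty T -> Dty o :=
  fun d => exist _ (eqb T c d) (eqf_ok1 T c d).

Lemma eqf_ok2 T (c : Dty T) : exists u, typeof u = Some (Arr T o) /\
  forall d w, pv T d w -> typeof w = Some T -> pv o (eqf_fun T c d) (App u w).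
Proof.
  destruct (Dwit T c) as [s [Ts Hs]]. exists (App (N (EqC T)) s). split.
  - apply typeof_App. exists T. auto.
  - intros d w H1 H2. apply (pv_eqb T c d s w); auto.
Qed.

Definition eqf T (c : Dty T) : Dty (Arr T o) := exist _ (eqf_fun T c) (eqf_ok2 T c).

Lemma eqel_ok T : exists u, typeof u = Some (Arr T (Arr T o)) /\
  forall c w, pv T c w -> typeof w = Some T -> pv (Arr T o) (eqf T c) (App u w).
Proof.
  exists (N (EqC T)). split; auto. intros c w H1 H2 d w' H3 H4.
  apply (pv_eqb T c d w w'); auto.
Qed.

Definition eqel T : Dty (Arr T (Arr T o)) := exist _ (eqf T) (eqel_ok T).

Definition varval T m : Dty T := proj1_sig (constructive_indefinite_description _ (Vall T m)).

Lemma varval_ok T m : pv T (varval T m) (N (Var T m)).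
Proof. unfold varval. destruct constructive_indefinite_description. auto. Qed.

Lemma app_ext_F : forall s t (f g : Dty (Arr s t)),
  (forall a, proj1_sig f a = proj1_sig g a) -> f = g.
Proof. intros s t f g H. apply sig_eq. apply functional_extensionality. auto. Qed.

Definition Fm : frame := Frame Dty (fun T => varval T 0) (fun s t f a => proj1_sig f a) app_ext_F.

Definition Im : assignment Fm := fun x =>
  match x as x return Dty (nty x) with
  | Var T m => varval T m
  | NegC => negel
  | EqC T => eqel T
  end.

Definition tvm (b : D Fm o) : bool := proj1_sig b.

Lemma no_Neq_var_o : ~ E (Neq o (N (Var o 0)) (N (Var o 0))).
Proof.
  intros H. destruct (HE3 _ _ H) as [[H1 H2]|[H1 H2]]; eapply E_no_var_o; eauto.
Qed.

Lemma logical_m : logical Fm Im tvm.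
Proof.
  assert (Nx : norm (N (Var o 0)) = N (Var o 0)).
  { apply norm_var. do 2 eexists; eauto. exists 0. reflexivity. }
  constructor.
  - intros a b H. apply sig_eq. exact H.
  - intros b. destruct b.
    + assert (P : exists t, typeof t = Some o /\ pvo true t).
      { exists (Eq o (N (Var o 0)) (N (Var o 0))). split.
        - apply typeof_Eq. auto.
        - unfold pvo. rewrite (norm_Eq norm Hnorm o (N (Var o 0)) (N (Var o 0)) eq_refl eq_refl), Nx. apply no_Neq_var_o. }
      exists (exist _ true P). reflexivity.
    + assert (P : exists t, typeof t = Some o /\ pvo false t).
      { exists (Neq o (N (Var o 0)) (N (Var o 0))). split.
        - apply typeof_Neq. auto.
        - unfold pvo. rewrite (norm_Neq norm Hnorm o (N (Var o 0)) (N (Var o 0)) eq_refl eq_refl), Nx. apply no_Neq_var_o. }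
      exists (exist _ false P). reflexivity.
  - intros a. reflexivity.
  - intros t a b. unfold tvm. simpl. unfold eqb.
    destruct excluded_middle_informative; split; congruence.
Qed.

Definition adm (th : subst) (J : assignment Fm) : Prop :=
  wt_subst th /\ forall x, pv (nty x) (J x) (sapp th (N x)).

Lemma upd_same J x c : upd Fm J x c x = c.
Proof.
  unfold upd. destruct (name_eq_dec x x) as [e|n].
  - rewrite (UIP_dec name_eq_dec e eq_refl). reflexivity.
  - congruence.
Qed.

Lemma upd_other J x y c : x <> y -> upd Fm J x c y = J y.
Proof. intros H. unfold upd. destruct (name_eq_dec x y); congruence. Qed.

Lemma wt_supd th x w : wt_subst th -> typeof w = Some (nty x) -> wt_subst (supd th x w).
Proof.
  intros H1 H2 y u. unfold supd. destruct (name_eq_dec x y) as [<-|n].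
  - intros H; inversion H; subst; auto.
  - apply H1.
Qed.

Lemma adm_ext th J x c w : adm th J -> pv (nty x) c w -> typeof w = Some (nty x) ->
  adm (supd th x w) (upd Fm J x c).
Proof.
  intros [Hw Hth] Hc Tw. assert (Hw' := wt_supd th x w Hw Tw). split; auto.
  intros y. destruct (Hsubst _ Hw') as (_ & S1 & _).
  destruct (name_eq_dec x y) as [<-|n].
  - rewrite upd_same, S1. unfold supd. destruct (name_eq_dec x x); [auto|congruence].
  - rewrite upd_other by auto. rewrite S1. unfold supd. destruct (name_eq_dec x y); [congruence|].
    destruct (Hsubst _ Hw) as (_ & S1' & _). rewrite <- S1'. apply Hth.
Qed.

Lemma adm_main s : forall T J, typeof s = Some T -> (exists th, adm th J) ->
  exists v, ev Fm J T s v /\ forall th, adm th J -> pv T v (sapp th s).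
Proof.
  induction s as [x | s1 IH1 s2 IH2 | x s IH]; intros T J HT Hadm.
  - simpl in HT. inversion HT; subst. exists (J x). split.
    + constructor.
    + intros th [_ Hth]. apply Hth.
  - pose proof HT as HT'. apply typeof_App in HT. destruct HT as [a [H1 H2]].
    destruct (IH1 _ J H1 Hadm) as [f [Hf1 Hf2]].
    destruct (IH2 _ J H2 Hadm) as [c [Hc1 Hc2]].
    exists (proj1_sig f c). split.
    + exact (ev_App Fm J a T s1 s2 f c Hf1 Hc1).
    + intros th Hth. destruct (Hsubst _ (proj1 Hth)) as (Sty & _ & S2 & _).
      rewrite S2 by (eexists; eauto). apply (Hf2 th Hth); [apply Hc2; auto | apply Sty; auto].
  - simpl in HT. destruct (typeof s) as [B|] eqn:Hs; [|discriminate].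
    inversion HT; subst T. destruct Hadm as [th0 Hth0].
    assert (Hc : forall c : Dty (nty x), exists v, ev Fm (upd Fm J x c) B s v /\
                  forall th, adm th (upd Fm J x c) -> pv B v (sapp th s)).
    { intros c. apply IH; auto. destruct (Dwit _ c) as [w [Tw Pw]].
      exists (supd th0 x w). apply adm_ext; auto. }
    set (f := fun c => proj1_sig (constructive_indefinite_description _ (Hc c))).
    assert (Hf : forall c, ev Fm (upd Fm J x c) B s (f c) /\
                  forall th, adm th (upd Fm J x c) -> pv B (f c) (sapp th s)).
    { intros c. unfold f. destruct constructive_indefinite_description as [v Hv]. exact Hv. }
    assert (key : forall th, adm th J -> typeof (sapp th (Lam x s)) = Some (Arr (nty x) B) /\
       forall c w, pv (nty x) c w -> typeof w = Some (nty x) -> pv B (f c) (App (sapp th (Lam x s)) w)).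
    { intros th Hth. destruct (Hsubst _ (proj1 Hth)) as (Sty & _ & _ & S3 & _).
      assert (TL : typeof (sapp th (Lam x s)) = Some (Arr (nty x) B)).
      { apply Sty. simpl. rewrite Hs. reflexivity. }
      split; auto. intros c w Hcw Tw.
      assert (Hth' := adm_ext th J x c w Hth Hcw Tw).
      destruct (Hsubst _ (proj1 Hth')) as (Sty' & _).
      apply (pv_norm B (f c) (sapp (supd th x w) s)).
      - apply Sty'. auto.
      - apply typeof_App. eauto.
      - rewrite S3; auto. exists (Arr (nty x) B). simpl. rewrite Hs. reflexivity.
      - apply (proj2 (Hf c)). auto. }
    destruct (key th0 Hth0) as [TL0 K0].
    exists (exist _ f (ex_intro _ (sapp th0 (Lam x s)) (conj TL0 K0))). split.
    + apply ev_Lam. intros c. apply (proj1 (Hf c)).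
    + intros th Hth c w H1 H2. exact (proj2 (key th Hth) c w H1 H2).
Qed.

Lemma adm0 : adm (fun _ => None) Im.
Proof.
  assert (W : wt_subst (fun _ => None)) by (intros y u H; discriminate).
  split; auto. intros x. destruct (Hsubst _ W) as (_ & S1 & _). rewrite S1.
  destruct x as [T m| |T].
  - apply varval_ok.
  - simpl. intros c w H1 H2. apply pv_neg; auto.
  - simpl. intros c w H1 H2 d w' H3 H4. apply (pv_eqb T c d w w'); auto.
Qed.

Theorem model_sat : satisfiable E.
Proof.
  exists Fm, Im, tvm. split; [apply logical_m|split].
  - intros s t Hs. destruct (adm_main s t Im Hs (ex_intro (fun th => adm th Im) _ adm0)) as [v [Hv _]]. eauto.
  - intros s HEs. destruct (HEbr s HEs) as [Ts Ns].
    destruct (adm_main s o Im Ts (ex_intro (fun th => adm th Im) _ adm0)) as [v [Hv Hp]].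
    exists v. split; auto.
    assert (W : wt_subst (fun _ => None)) by (intros y u H; discriminate).
    destruct (Hsubst _ W) as (Sty & _ & _ & _ & S4).
    assert (Hpv := pv_norm o v _ s (Sty _ _ Ts) Ts ltac:(rewrite S4; eexists; eauto) (Hp _ adm0)).
    assert (K : forall b, pvo b s -> b = true).
    { intros b. unfold pvo. rewrite Ns. destruct b; auto. }
    apply K. exact Hpv.
Qed.

End Model.


Lemma to_nat_inj p q : Cantor.to_nat p = Cantor.to_nat q -> p = q.
Proof.
  intros H. rewrite <- (Cantor.cancel_of_to p), <- (Cantor.cancel_of_to q), H. reflexivity.
Qed.

Fixpoint enc_ty (t : ty) : nat :=
  match t with
  | Base n => Cantor.to_nat (0, n)
  | Arr a b => Cantor.to_nat (1, Cantor.to_nat (enc_ty a, enc_ty b))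
  end.

Lemma enc_ty_inj a b : enc_ty a = enc_ty b -> a = b.
Proof.
  revert b. induction a as [n|a1 IH1 a2 IH2]; intros [m|b1 b2]; simpl; intros H;
  apply to_nat_inj in H; try discriminate.
  - injection H as ->. auto.
  - injection H as H. apply to_nat_inj in H. injection H as H1 H2. f_equal; auto.
Qed.

Definition enc_name (x : name) : nat :=
  match x with
  | Var t n => Cantor.to_nat (0, Cantor.to_nat (enc_ty t, n))
  | NegC => Cantor.to_nat (1, 0)
  | EqC t => Cantor.to_nat (2, enc_ty t)
  end.

Lemma enc_name_inj x y : enc_name x = enc_name y -> x = y.
Proof.
  destruct x, y; simpl; intros H; apply to_nat_inj in H; try discriminate; auto.
  - injection H as H. apply to_nat_inj in H. injection H as H1 H2. apply enc_ty_inj in H1. subst. auto.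
  - injection H as H. apply enc_ty_inj in H. subst. auto.
Qed.

Fixpoint enc (s : tm) : nat :=
  match s with
  | N x => Cantor.to_nat (0, enc_name x)
  | App s t => Cantor.to_nat (1, Cantor.to_nat (enc s, enc t))
  | Lam x s => Cantor.to_nat (2, Cantor.to_nat (enc_name x, enc s))
  end.

Lemma enc_inj s t : enc s = enc t -> s = t.
Proof.
  revert t. induction s as [x|s1 IH1 s2 IH2|x s IH]; intros [y|t1 t2|y t]; simpl; intros H;
  apply to_nat_inj in H; try discriminate.
  - injection H as H. apply enc_name_inj in H. subst. auto.
  - injection H as H. apply to_nat_inj in H. injection H as H1 H2. f_equal; auto.
  - injection H as H. apply to_nat_inj in H. injection H as H1 H2. apply enc_name_inj in H1. f_equal; auto.
Qed.

Definition en (n : nat) : tm :=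
  match excluded_middle_informative (exists t, enc t = n) with
  | left H => proj1_sig (constructive_indefinite_description _ H)
  | right _ => N NegC
  end.

Lemma en_surj t : exists n, en n = t.
Proof.
  exists (enc t). unfold en. destruct excluded_middle_informative as [H|H].
  - destruct constructive_indefinite_description as [t' Ht']. simpl. apply enc_inj. auto.
  - exfalso. apply H. eauto.
Qed.

Definition rule_of (k : nat) : rule :=
  match k with 0 => RDN | 1 => RBQ | 2 => RBE | 3 => RFQ | 4 => RFE | 5 => RMat | 6 => RDec | _ => RCon end.
Definition code_rule (r : rule) : nat :=
  match r with RDN => 0 | RBQ => 1 | RBE => 2 | RFQ => 3 | RFE => 4 | RMat => 5 | RDec => 6 | RCon => 7 end.

Definition decode (c : nat) : rule * tm * tm * tm :=
  let (r', c1) := Cantor.of_nat c in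
  let (i, c2) := Cantor.of_nat c1 in
  let (j, k) := Cantor.of_nat c2 in (rule_of r', en i, en j, en k).

Lemma decode_surj r p q u : exists c, decode c = (r, p, q, u).
Proof.
  destruct (en_surj p) as [i Hi], (en_surj q) as [j Hj], (en_surj u) as [k Hk].
  exists (Cantor.to_nat (code_rule r, Cantor.to_nat (i, Cantor.to_nat (j, k)))).
  unfold decode. rewrite !Cantor.cancel_of_to. subst. destruct r; reflexivity.
Qed.

Lemma stage_surj c m : exists n, m <= n /\ fst (Cantor.of_nat n) = c.
Proof.
  exists (Cantor.to_nat (c, m)). rewrite Cantor.cancel_of_to. split; auto.
  pose proof (Cantor.to_nat_non_decreasing c m). lia.
Qed.

Definition nvar (x : name) : nat := match x with Var _ n => n | _ => 0 end.
Fixpoint mxv (s : tm) : nat :=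
  match s with
  | N x => nvar x
  | App s t => max (mxv s) (mxv t)
  | Lam x s => max (nvar x) (mxv s)
  end.

Lemma free_mxv a n r : free (Var a n) r -> n <= mxv r.
Proof.
  induction r as [x|s IHs t IHt|x s IH]; simpl; intros H.
  - subst. simpl. lia.
  - destruct H as [H|H]; [apply IHs in H|apply IHt in H]; lia.
  - destruct H as [_ H]. apply IH in H. lia.
Qed.

Lemma fresh_exists (A : tm -> Prop) a : finite A -> exists n, forall r, A r -> ~ free (Var a n) r.
Proof.
  intros [l Hl]. exists (S (fold_right (fun r m => max (mxv r) m) 0 l)).
  intros r Hr Hf. apply Hl in Hr. apply free_mxv in Hf.
  assert (forall l, In r l -> mxv r <= fold_right (fun r m => max (mxv r) m) 0 l).
  { clear. induction l; simpl; intros H; [tauto|]. destruct H as [->|H]; [lia|]. apply IHl in H. lia. }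
  specialize (H l Hr). lia.
Qed.

Lemma dec_alts_exists ss ts : (forall s, In s ss -> exists a, typeof s = Some a) ->
  length ss = length ts -> exists alts, dec_alts ss ts alts.
Proof.
  revert ts. induction ss as [|s ss IH]; intros [|t ts] Hty L; simpl in L; try discriminate.
  - exists []. split; auto.
  - destruct (Hty s (or_introl eq_refl)) as [a Ha].
    destruct (IH ts (fun s' H => Hty s' (or_intror H)) ltac:(lia)) as [alts [L' Hal]].
    exists ([Neq a s t] :: alts). split; simpl; auto. constructor; auto. exists a. auto.
Qed.

Lemma dec_alts_in ss ts alts alt : dec_alts ss ts alts -> In alt alts ->
  exists s t a, In (s, t) (combine ss ts) /\ typeof s = Some a /\ alt = [Neq a s t].
Proof.
  intros [_ H]. revert H. generalize (combine ss ts). intros l H. induction H as [|al st alts' l' H1 H2 IH]; simpl.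
  - tauto.
  - intros [->|Hin].
    + destruct H1 as [a [Ha ->]]. exists (fst st), (snd st), a. destruct st. simpl. auto.
    + destruct (IH Hin) as (s & t & a & ? & ? & ?). exists s, t, a. auto.
Qed.

Lemma Forall2_combine_in {X Y : Type} (R : X -> Y -> Prop) l1 l2 x y :
  Forall2 R l1 l2 -> In (x, y) (combine l1 l2) -> R x y.
Proof.
  induction 1; simpl; [tauto|]. intros [H1|H1]; [inversion H1; subst; auto|auto].
Qed.

Lemma in_combine_l' {X Y : Type} (l1 : list X) (l2 : list Y) x y : In (x, y) (combine l1 l2) -> In x l1.
Proof. apply in_combine_l. Qed.
Lemma in_combine_r' {X Y : Type} (l1 : list X) (l2 : list Y) x y : In (x, y) (combine l1 l2) -> In y l2.
Proof. apply in_combine_r. Qed.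

Lemma map_id_in (f : tm -> tm) l x : map f l = l -> In x l -> f x = x.
Proof.
  induction l; simpl; [tauto|]. intros H. injection H as H1 H2. intros [->|Hin]; auto.
Qed.


Section Sat.
Variable norm : tm -> tm.
Hypothesis Hnorm : norm_axioms norm.

Definition NR (A : tm -> Prop) : Prop := branch norm A /\ finite A /\ ~ refutable norm A.
Definition ext (A : tm -> Prop) (alt : list tm) : tm -> Prop := fun s => A s \/ In s alt.

Lemma finite_ext A alt : finite A -> finite (ext A alt).
Proof.
  intros [l Hl]. exists (l ++ alt). intros s. unfold ext. rewrite in_app_iff, Hl. tauto.
Qed.

Lemma branch_ext A alt : branch norm A -> (forall s, In s alt -> typeof s = Some o /\ norm s = s) ->
  branch norm (ext A alt).
Proof. intros H1 H2 s [H|H]; auto. Qed.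

Lemma Neg_ok s : typeof s = Some o -> norm s = s -> typeof (Neg s) = Some o /\ norm (Neg s) = Neg s.
Proof. intros H1 H2. split. apply typeof_Neg; auto. rewrite (norm_Neg norm Hnorm s H1), H2. auto. Qed.

Lemma Eq_ok a s t : typeof s = Some a -> typeof t = Some a -> norm s = s -> norm t = t ->
  typeof (Eq a s t) = Some o /\ norm (Eq a s t) = Eq a s t.
Proof. intros H1 H2 H3 H4. split. apply typeof_Eq; auto. rewrite (norm_Eq norm Hnorm a s t H1 H2), H3, H4. auto. Qed.

Lemma Neq_ok a s t : typeof s = Some a -> typeof t = Some a -> norm s = s -> norm t = t ->
  typeof (Neq a s t) = Some o /\ norm (Neq a s t) = Neq a s t.
Proof. intros H1 H2 H3 H4. split. apply typeof_Neq; auto. rewrite (norm_Neq norm Hnorm a s t H1 H2), H3, H4. auto. Qed.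

Lemma br_Neg (A : tm -> Prop) s : branch norm A -> A (Neg s) -> typeof s = Some o /\ norm s = s.
Proof.
  intros HA H. destruct (HA _ H) as [T1 N1]. apply typeof_Neg in T1. destruct T1 as [_ T1].
  split; auto. apply (normal_Neg norm Hnorm); auto.
Qed.

Lemma br_Eq (A : tm -> Prop) a s t : branch norm A -> A (Eq a s t) ->
  typeof s = Some a /\ typeof t = Some a /\ norm s = s /\ norm t = t.
Proof.
  intros HA H. destruct (HA _ H) as [T1 N1]. apply typeof_Eq in T1. destruct T1 as [_ [T1 T2]].
  destruct (normal_Eq norm Hnorm a s t T1 T2 N1). auto.
Qed.

Lemma br_Neq (A : tm -> Prop) a s t : branch norm A -> A (Neq a s t) ->
  typeof s = Some a /\ typeof t = Some a /\ norm s = s /\ norm t = t.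
Proof.
  intros HA H. destruct (HA _ H) as [T1 N1]. apply typeof_Neq in T1. destruct T1 as [_ [T1 T2]].
  destruct (normal_Neq norm Hnorm a s t T1 T2 N1). auto.
Qed.

Lemma dec_branch x ss ts alts alt b :
  typeof (apps (N x) ss) = Some (Base b) -> typeof (apps (N x) ts) = Some (Base b) ->
  norm (apps (N x) ss) = apps (N x) ss -> norm (apps (N x) ts) = apps (N x) ts ->
  dec_alts ss ts alts -> In alt alts -> forall s, In s alt -> typeof s = Some o /\ norm s = s.
Proof.
  intros T1 T2 N1 N2 Hd Hin. pose proof (proj1 Hd) as L.
  destruct (dec_alts_in _ _ _ _ Hd Hin) as (s & t & a & Hst & Ta & ->).
  intros s' [<-|[]].
  pose proof (apps_args_same _ _ _ _ _ _ eq_refl T1 T2 L) as F.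
  destruct (Forall2_combine_in _ _ _ _ _ F Hst) as [a' [Ta' Tb']].
  rewrite Ta in Ta'. inversion Ta'; subst a'.
  apply Neq_ok; auto.
  - apply (map_id_in norm ss); [eapply normal_apps; eauto|]. eapply in_combine_l'; eauto.
  - apply (map_id_in norm ts); [eapply normal_apps; eauto|]. eapply in_combine_r'; eauto.
Qed.

Lemma step_branch r A alts alt : branch norm A -> step norm r A alts -> In alt alts ->
  branch norm (ext A alt).
Proof.
  intros HA Hs Hin. apply branch_ext; auto.
  destruct Hs as [A s H | A s t H | A s t H | A a b s t u H Hu Tu | A a b s t n H Hf Hr
                 | A x ss ts alts Hx H1 H2 Hd | A a x ss ts alts Ha Hx H Hd | A a s t u v Ha H1 H2].
  - destruct Hin as [<-|[]]. intros s' [<-|[]].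
    destruct (br_Neg _ _ HA H) as [T1 N1]. apply typeof_Neg in T1. destruct T1 as [_ T1].
    split; auto. apply (normal_Neg norm Hnorm); auto.
  - destruct (br_Eq _ _ _ _ HA H) as (T1 & T2 & N1 & N2).
    destruct Hin as [<-|[<-|[]]]; intros s' Hs'; simpl in Hs';
    repeat destruct Hs' as [<-|Hs']; try contradiction; auto using Neg_ok.
  - destruct (br_Neq _ _ _ _ HA H) as (T1 & T2 & N1 & N2).
    destruct Hin as [<-|[<-|[]]]; intros s' Hs'; simpl in Hs';
    repeat destruct Hs' as [<-|Hs']; try contradiction; auto using Neg_ok.
  - destruct (br_Eq _ _ _ _ HA H) as (T1 & T2 & N1 & N2).
    destruct Hin as [<-|[]]. intros s' [<-|[]].
    assert (Ts : typeof (App s u) = Some b) by (apply typeof_App; eauto).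
    assert (Tt : typeof (App t u) = Some b) by (apply typeof_App; eauto).
    apply Eq_ok; try apply norm_type; auto; eapply norm_idem; eauto.
  - destruct (br_Neq _ _ _ _ HA H) as (T1 & T2 & N1 & N2).
    destruct Hin as [<-|[]]. intros s' [<-|[]].
    assert (Tx : typeof (N (Var a n)) = Some a) by reflexivity.
    assert (Ts : typeof (App s (N (Var a n))) = Some b) by (apply typeof_App; eauto).
    assert (Tt : typeof (App t (N (Var a n))) = Some b) by (apply typeof_App; eauto).
    apply Neq_ok; try apply norm_type; auto; eapply norm_idem; eauto.
  - destruct (HA _ H1) as [T1 N1]. destruct (br_Neg _ _ HA H2) as [T2 N2].
    apply (dec_branch x ss ts alts alt 0); auto.
  - destruct (br_Neq _ _ _ _ HA H) as (T1 & T2 & N1 & N2). destruct Ha as [k ->].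
    apply (dec_branch x ss ts alts alt (S k)); auto.
  - destruct (br_Eq _ _ _ _ HA H1) as (T1 & T2 & N1 & N2).
    destruct (br_Neq _ _ _ _ HA H2) as (T3 & T4 & N3 & N4).
    destruct Hin as [<-|[<-|[]]]; intros s' Hs'; simpl in Hs';
    repeat destruct Hs' as [<-|Hs']; try contradiction; auto using Neq_ok.
Qed.

Lemma NR_not_closed A : NR A -> ~ closed A.
Proof.
  intros [HB [HF HR]] Hc. apply HR. apply refute with (alts := []); auto.
  - destruct Hc as [[n [H1 H2]]|[a [n [Ha H]]]].
    + exists RMat. split; [|auto].
      apply (st_Mat norm A (Var o n) [] [] []); auto.
      * do 2 eexists; eauto.
      * split; auto.
    + exists RDec. split; [|auto].
      apply (st_Dec norm A a (Var a n) [] [] []); auto.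
      * do 2 eexists; eauto.
      * split; auto.
  - intros alt [].
Qed.

Lemma nr_step r A alts : NR A -> step norm r A alts ->
  exists alt, In alt alts /\ NR (ext A alt).
Proof.
  intros HN Hs. apply NNPP. intros H. destruct HN as [HB [HF HR]]. apply HR.
  apply refute with (alts := alts); auto.
  - exists r. split; auto. intros Hc. exfalso. apply (NR_not_closed A); [split; auto|auto].
  - intros alt Hin. apply NNPP. intros Hr. apply H. exists alt. split; auto.
    split; [apply (step_branch r A alts alt HB Hs Hin)|split; [apply finite_ext; auto|exact Hr]].
Qed.

Definition matches (r : rule) (p q u : tm) (alts : list (list tm)) : Prop :=
  match r with
  | RDN => exists s, p = Neg (Neg s) /\ alts = [[s]]
  | RBQ => exists s t, p = Eq o s t /\ alts = [[s; t]; [Neg s; Neg t]]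
  | RBE => exists s t, p = Neq o s t /\ alts = [[s; Neg t]; [Neg s; t]]
  | RFQ => exists a b s t, p = Eq (Arr a b) s t /\ alts = [[Eq b (norm (App s u)) (norm (App t u))]]
  | RFE => exists a b s t n, p = Neq (Arr a b) s t /\
      alts = [[Neq b (norm (App s (N (Var a n)))) (norm (App t (N (Var a n))))]]
  | RMat => exists x ss ts, p = apps (N x) ss /\ q = Neg (apps (N x) ts) /\ dec_alts ss ts alts
  | RDec => exists a x ss ts, p = Neq a (apps (N x) ss) (apps (N x) ts) /\ dec_alts ss ts alts
  | RCon => exists a s t u' v, p = Eq a s t /\ q = Neq a u' v /\
      alts = [[Neq a s u'; Neq a t u']; [Neq a s v; Neq a t v]]
  end.

Variable A0 : tm -> Prop.
Hypothesis HA0 : NR A0.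

Definition NRs := {A : tm -> Prop | NR A}.

Definition good (A : tm -> Prop) (tk : rule * tm * tm * tm) (B : tm -> Prop) : Prop :=
  match tk with (r, p, q, u) =>
    exists alts alt, step norm r A alts /\ matches r p q u alts /\ In alt alts /\ B = ext A alt
  end.

Definition next (tk : rule * tm * tm * tm) (A : NRs) : NRs :=
  match excluded_middle_informative (exists B : NRs, good (proj1_sig A) tk (proj1_sig B)) with
  | left H => proj1_sig (constructive_indefinite_description _ H)
  | right _ => A
  end.

Fixpoint chain (n : nat) : NRs :=
  match n with
  | 0 => exist _ A0 HA0
  | S n => next (decode (fst (Cantor.of_nat n))) (chain n)
  end.

Definition Ch (n : nat) : tm -> Prop := proj1_sig (chain n).

Lemma next_mono tk A s : proj1_sig A s -> proj1_sig (next tk A) s.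
Proof.
  intros H. unfold next. destruct excluded_middle_informative as [He|He]; auto.
  destruct constructive_indefinite_description as [B HB]. simpl.
  destruct tk as [[[r p] q] u]. destruct HB as (alts & alt & _ & _ & _ & ->). left. auto.
Qed.

Lemma Ch_mono m n s : m <= n -> Ch m s -> Ch n s.
Proof.
  induction 1 as [|k Hk IH]; auto. intros H'. unfold Ch in *.
  change (proj1_sig (next (decode (fst (Cantor.of_nat k))) (chain k)) s). apply next_mono. auto.
Qed.

Definition Eu (s : tm) : Prop := exists n, Ch n s.

Lemma Ch_NR n : NR (Ch n).
Proof. unfold Ch. apply proj2_sig. Qed.

Lemma fire r p q u m :
  (forall n, m <= n -> exists alts, step norm r (Ch n) alts /\ matches r p q u alts) ->
  exists alts alt, matches r p q u alts /\ In alt alts /\ forall s, In s alt -> Eu s.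
Proof.
  intros H. destruct (decode_surj r p q u) as [c Hc].
  destruct (stage_surj c m) as [n [Hmn Hn]].
  destruct (H n Hmn) as [alts [Hs Hm]].
  destruct (nr_step _ _ _ (Ch_NR n) Hs) as [alt [Hin HNR]].
  assert (Hex : exists B : NRs, good (proj1_sig (chain n)) (r, p, q, u) (proj1_sig B)).
  { exists (exist _ (ext (Ch n) alt) HNR). simpl. exists alts, alt. auto. }
  assert (HS : Ch (S n) = proj1_sig (next (r, p, q, u) (chain n))).
  { unfold Ch. simpl. rewrite Hn, Hc. reflexivity. }
  revert HS. unfold next. destruct excluded_middle_informative as [He|He]; [|contradiction].
  destruct constructive_indefinite_description as [B HB]. simpl.
  destruct HB as (alts' & alt' & _ & Hm' & Hin' & HBe). intros HS.
  exists alts', alt'. split; auto. split; auto. intros s Hs'. exists (S n). rewrite HS, HBe. right. auto.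
Qed.

Lemma Eu_at s : Eu s -> exists m, forall n, m <= n -> Ch n s.
Proof. intros [m Hm]. exists m. intros n H. eapply Ch_mono; eauto. Qed.

Lemma Eu_br s : Eu s -> typeof s = Some o /\ norm s = s.
Proof. intros [n Hn]. apply (proj1 (Ch_NR n)). auto. Qed.

Lemma E1 s : Eu (Neg (Neg s)) -> Eu s.
Proof.
  intros H. destruct (Eu_at _ H) as [m Hm].
  destruct (fire RDN (Neg (Neg s)) s s m) as (alts & alt & Hma & Hin & He).
  { intros n Hn. exists [[s]]. split. constructor. auto. exists s. auto. }
  destruct Hma as (s' & Hp & ->). injection Hp as ->.
  destruct Hin as [<-|[]]. apply He. left; auto.
Qed.

Lemma E2 s t : Eu (Eq o s t) -> (Eu s /\ Eu t) \/ (Eu (Neg s) /\ Eu (Neg t)).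
Proof.
  intros H. destruct (Eu_at _ H) as [m Hm].
  destruct (fire RBQ (Eq o s t) s s m) as (alts & alt & Hma & Hin & He).
  { intros n Hn. eexists. split. constructor. auto. exists s, t. auto. }
  destruct Hma as (s' & t' & Hp & ->). injection Hp as -> ->.
  destruct Hin as [<-|[<-|[]]]; [left|right]; split; apply He; simpl; auto.
Qed.

Lemma E3 s t : Eu (Neq o s t) -> (Eu s /\ Eu (Neg t)) \/ (Eu (Neg s) /\ Eu t).
Proof.
  intros H. destruct (Eu_at _ H) as [m Hm].
  destruct (fire RBE (Neq o s t) s s m) as (alts & alt & Hma & Hin & He).
  { intros n Hn. eexists. split. constructor. auto. exists s, t. auto. }
  destruct Hma as (s' & t' & Hp & ->). injection Hp as -> ->.
  destruct Hin as [<-|[<-|[]]]; [left|right]; split; apply He; simpl; auto.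
Qed.

Lemma E4 a b s t u : Eu (Eq (Arr a b) s t) -> norm u = u -> typeof u = Some a ->
  Eu (Eq b (norm (App s u)) (norm (App t u))).
Proof.
  intros H Hu Tu. destruct (Eu_at _ H) as [m Hm].
  destruct (fire RFQ (Eq (Arr a b) s t) s u m) as (alts & alt & Hma & Hin & He).
  { intros n Hn. eexists. split. econstructor; eauto. exists a, b, s, t. auto. }
  destruct Hma as (a' & b' & s' & t' & Hp & ->). injection Hp as -> -> -> ->.
  destruct Hin as [<-|[]]. apply He. left; auto.
Qed.

Lemma E5 a b s t : Eu (Neq (Arr a b) s t) ->
  exists n, Eu (Neq b (norm (App s (N (Var a n)))) (norm (App t (N (Var a n))))).
Proof.
  intros H. apply NNPP. intros Hno. destruct (Eu_at _ H) as [m Hm].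
  destruct (fire RFE (Neq (Arr a b) s t) s s m) as (alts & alt & Hma & Hin & He).
  { intros n Hn. destruct (fresh_exists (Ch n) a (proj1 (proj2 (Ch_NR n)))) as [k Hk].
    eexists. split.
    - apply (st_FE norm (Ch n) a b s t k); auto.
      intros [k' Hk']. apply Hno. exists k'. exists n. auto.
    - exists a, b, s, t, k. auto. }
  destruct Hma as (a' & b' & s' & t' & k & Hp & ->). injection Hp as -> -> -> ->.
  destruct Hin as [<-|[]]. apply Hno. exists k. apply He. left; auto.
Qed.

Lemma E6 x ss ts : is_var x -> Eu (apps (N x) ss) -> Eu (Neg (apps (N x) ts)) ->
  length ss = length ts -> exists s t a, In (s,t) (combine ss ts) /\ typeof s = Some a /\ Eu (Neq a s t).
Proof.
  intros Hx H1 H2 L. destruct (Eu_at _ H1) as [m1 Hm1]. destruct (Eu_at _ H2) as [m2 Hm2].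
  destruct (dec_alts_exists ss ts) as [alts0 Hd0]; auto.
  { intros s Hs. destruct (Eu_br _ H1) as [T1 _].
    destruct (apps_args_small _ _ _ _ T1 eq_refl s Hs) as [a [Ta _]]. eauto. }
  destruct (fire RMat (apps (N x) ss) (Neg (apps (N x) ts)) (N x) (max m1 m2)) as (alts & alt & Hma & Hin & He).
  { intros n Hn. exists alts0. split.
    - apply (st_Mat norm (Ch n) x ss ts alts0); auto. apply Hm1; lia. apply Hm2; lia.
    - exists x, ss, ts. auto. }
  destruct Hma as (x' & ss' & ts' & Hp & Hq & Hd).
  apply apps_N_inj in Hp. destruct Hp as [<- <-]. injection Hq as Hq.
  apply apps_N_inj in Hq. destruct Hq as [_ <-].
  destruct (dec_alts_in _ _ _ _ Hd Hin) as (s & t & a & Hst & Ta & ->).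
  exists s, t, a. repeat split; auto. apply He. left; auto.
Qed.

Lemma E7 a x ss ts : is_sort a -> is_var x -> Eu (Neq a (apps (N x) ss) (apps (N x) ts)) ->
  length ss = length ts -> exists s t b, In (s,t) (combine ss ts) /\ typeof s = Some b /\ Eu (Neq b s t).
Proof.
  intros Ha Hx H L. destruct (Eu_at _ H) as [m Hm].
  destruct (dec_alts_exists ss ts) as [alts0 Hd0]; auto.
  { intros s Hs. destruct (Eu_br _ H) as [T1 _]. apply typeof_Neq in T1. destruct T1 as [_ [T1 _]].
    destruct (apps_args_small _ _ _ _ T1 eq_refl s Hs) as [c [Tc _]]. eauto. }
  destruct (fire RDec (Neq a (apps (N x) ss) (apps (N x) ts)) (N x) (N x) m) as (alts & alt & Hma & Hin & He).
  { intros n Hn. exists alts0. split.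
    - apply (st_Dec norm (Ch n) a x ss ts alts0); auto.
    - exists a, x, ss, ts. auto. }
  destruct Hma as (a' & x' & ss' & ts' & Hp & Hd).
  injection Hp as -> Hp1 Hp2.
  apply apps_N_inj in Hp1. destruct Hp1 as [<- <-].
  apply apps_N_inj in Hp2. destruct Hp2 as [_ <-].
  destruct (dec_alts_in _ _ _ _ Hd Hin) as (s & t & b & Hst & Tb & ->).
  exists s, t, b. repeat split; auto. apply He. left; auto.
Qed.

Lemma E8 a s t u v : is_sort a -> Eu (Eq a s t) -> Eu (Neq a u v) ->
  (Eu (Neq a s u) /\ Eu (Neq a t u)) \/ (Eu (Neq a s v) /\ Eu (Neq a t v)).
Proof.
  intros Ha H1 H2. destruct (Eu_at _ H1) as [m1 Hm1]. destruct (Eu_at _ H2) as [m2 Hm2].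
  destruct (fire RCon (Eq a s t) (Neq a u v) s (max m1 m2)) as (alts & alt & Hma & Hin & He).
  { intros n Hn. eexists. split.
    - apply (st_Con norm (Ch n) a s t u v); auto. apply Hm1; lia. apply Hm2; lia.
    - exists a, s, t, u, v. auto. }
  destruct Hma as (a' & s' & t' & u' & v' & Hp & Hq & ->).
  injection Hp as -> -> ->. injection Hq as -> ->.
  destruct Hin as [<-|[<-|[]]]; [left|right]; split; apply He; simpl; auto.
Qed.

Lemma A0_sub s : A0 s -> Eu s.
Proof. intros H. exists 0. exact H. Qed.

End Sat.


Theorem theorem9p2 (norm : tm -> tm) (sapp : subst -> tm -> tm)
  (Hnorm : norm_axioms norm) (Hsubst : subst_axioms norm sapp)
  (A : tm -> Prop) :
  branch norm A -> finite A -> ~ satisfiable A -> refutable norm A.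
Proof.
  intros HB HF HS. apply NNPP. intros HR.
  assert (HN : NR norm A) by (split; [auto|split; auto]).
  apply HS.
  destruct (model_sat norm sapp Hnorm Hsubst en en_surj (Eu norm A HN)
    (Eu_br norm A HN) (E1 norm Hnorm A HN) (E2 norm Hnorm A HN) (E3 norm Hnorm A HN)
    (E4 norm Hnorm A HN) (E5 norm Hnorm A HN) (E6 norm Hnorm A HN) (E7 norm Hnorm A HN)
    (E8 norm Hnorm A HN)) as (F & I & tv & HL & HI & Hsat).
  exists F, I, tv. split; auto. split; auto. intros s Hs. apply Hsat. apply A0_sub. exact Hs.
Qed.
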